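(* Let $T\ge K\ge2$, $0<V\le T/K$, and suppose all $N=T/W$ windows have the same size $W$. Let $c=\frac18-\frac{\sqrt{\log(4/3)}}8$. Then for every policy $\pi$: if $W\le K^{1/3}(T/V)^{2/3}$, $R^\pi(T;W,V)\ge\frac c3(KV)^{1/3}T^{2/3}$; and if $W\ge K^{1/3}(T/V)^{2/3}$, $R^\pi(T;W,V)\ge c\,T\sqrt{K/W}$.
   Context: Bandit model: arms $[K]$, horizon $T$; in period $t$ arm $k$ has reward $Y_{t,k}\in[0,1]$ with mean $\mu_{t,k}\in[0,1]$, independent across periods; a (possibly randomized) policy picks $A_t$ using only past actions and observed rewards and observes $Y_{t,A_t}$. $\log$ is natural log. Windows are consecutive blocks $\mathcal W_j$ of $W$ periods partitioning $[T]$; $\mu^*_{\mathcal W_j}=\frac1W\max_k\sum_{t\in\mathcal W_j}\mu_{t,k}$. Regret $R^\pi(T;W,\{\mu\})=\sum_j W\mu^*_{\mathcal W_j}-\mathbb E[\sum_t\mu_{t,A_t}]$, and $R^\pi(T;W,V)$ is its supremum over all mean sequences in $[0,1]^{T\times K}$ with $\sum_{t=1}^{T-1}\max_k|\mu_{t,k}-\mu_{t+1,k}|\le V$ and all reward distributions on $[0,1]$ with those means. *)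

(* Defs.v *)
From Stdlib Require Import Reals List.
From Coquelicot Require Import Coquelicot.
Open Scope R_scope.

Fixpoint sumR (n : nat) (f : nat -> R) : R :=
  match n with O => 0 | S m => sumR m f + f m end.

Fixpoint maxK (K : nat) (f : nat -> R) : R :=
  match K with O => 0 | S O => f O | S m => Rmax (maxK m f) (f m) end.

(* Arms are 0..K-1, periods are 1..T.  A mean sequence is mu : period -> arm -> R. *)

(* A finitely supported reward distribution: list of (value, probability). *)
Definition dist := list (R * R)%type.
Definition dist_mass (d : dist) : R := fold_right (fun p s => snd p + s) 0 d.
Definition dist_mean (d : dist) : R := fold_right (fun p s => snd p * fst p + s) 0 d.
Definition dist_ok (d : dist) : Prop :=
  List.Forall (fun p => 0 <= fst p <= 1 /\ 0 <= snd p) d /\ dist_mass d = 1.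

(* Histories: list of (action, observed reward), oldest first. *)
Definition history := list (nat * R)%type.

(* A (possibly randomized) policy: given the period t and the history of past
   actions and observed rewards, a probability distribution over arms. *)
Definition policy := nat -> history -> nat -> R.
Definition is_policy (K : nat) (pol : policy) : Prop :=
  forall t h, (forall a, (a < K)%nat -> 0 <= pol t h a) /\ sumR K (pol t h) = 1.

(* Expected cumulative mean reward over the remaining n periods starting at
   period t with history h: E[ sum mu_{s,A_s} ]. *)
Fixpoint exp_reward (K : nat) (pol : policy) (mu : nat -> nat -> R)
    (nu : nat -> nat -> dist) (n t : nat) (h : history) : R :=
  match n with
  | O => 0
  | S n' =>
      sumR K (fun a => pol t h a *
        (mu t a + fold_right (fun p s =>
            snd p * exp_reward K pol mu nu n' (S t) (h ++ cons (a, fst p) nil) + s)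
          0 (nu t a)))
  end.

Definition env_ok (T K : nat) (mu : nat -> nat -> R) (nu : nat -> nat -> dist) : Prop :=
  forall t k, (1 <= t <= T)%nat -> (k < K)%nat ->
    0 <= mu t k <= 1 /\ dist_ok (nu t k) /\ dist_mean (nu t k) = mu t k.

Definition variation (T K : nat) (mu : nat -> nat -> R) : R :=
  sumR (T - 1) (fun i => maxK K (fun k => Rabs (mu (S i) k - mu (S (S i)) k))).

(* sum_j W * mu*_{W_j} = sum_j max_k sum_{t in W_j} mu_{t,k}, windows
   W_j = {jW+1, ..., (j+1)W}, j = 0..T/W-1. *)
Definition window_benchmark (T K W : nat) (mu : nat -> nat -> R) : R :=
  sumR (T / W) (fun j => maxK K (fun k => sumR W (fun i => mu (j * W + i + 1)%nat k))).

Definition regret (T K W : nat) (pol : policy) (mu : nat -> nat -> R)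
    (nu : nat -> nat -> dist) : R :=
  window_benchmark T K W mu - exp_reward K pol mu nu T 1 nil.

Definition worst_regret (T K W : nat) (V : R) (pol : policy) : Rbar :=
  Lub_Rbar (fun r => exists mu nu, env_ok T K mu nu /\ variation T K mu <= V /\
                       r = regret T K W pol mu nu).

(* Main.v *)
Require Import Defs.
From Stdlib Require Import Reals.
From Coquelicot Require Import Coquelicot.
Open Scope R_scope.
From Stdlib Require Import List Lra Lia FunctionalExtensionality.
From Coquelicot Require Import Coquelicot.
Open Scope R_scope.

Lemma sumR_ext n f g : (forall i, (i < n)%nat -> f i = g i) -> sumR n f = sumR n g.
Proof. induction n; intros H; simpl; auto. rewrite IHn by (intros; apply H; lia). rewrite H by lia. auto. Qed.

Lemma sumR_plus n f g : sumR n (fun i => f i + g i) = sumR n f + sumR n g.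
Proof. induction n; simpl; [lra|]. rewrite IHn; lra. Qed.

Lemma sumR_scal n c f : sumR n (fun i => c * f i) = c * sumR n f.
Proof. induction n; simpl; [lra|]. rewrite IHn; lra. Qed.

Lemma sumR_le n f g : (forall i, (i < n)%nat -> f i <= g i) -> sumR n f <= sumR n g.
Proof. induction n; intros H; simpl; [lra|]. apply Rplus_le_compat. apply IHn; intros; apply H; lia. apply H; lia. Qed.

Lemma sumR_const n c : sumR n (fun _ => c) = INR n * c.
Proof. induction n; simpl sumR; [simpl; lra|]. rewrite IHn, S_INR; lra. Qed.

Lemma sumR_swap n m f : sumR n (fun i => sumR m (fun k => f i k)) = sumR m (fun k => sumR n (fun i => f i k)).
Proof. induction n; simpl. { rewrite sumR_const; simpl; lra. }
  rewrite IHn, <- sumR_plus. reflexivity. Qed.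

Lemma sumR_pos n f : (forall i, (i < n)%nat -> 0 <= f i) -> (exists i, (i < n)%nat /\ 0 < f i) -> 0 < sumR n f.
Proof. induction n; intros H [i [Hi Hf]]; [lia|]. simpl.
  assert (0 <= sumR n f) by (rewrite <- (Rmult_0_r (INR n)), <- sumR_const; apply sumR_le; intros; apply H; lia).
  destruct (Nat.eq_dec i n). subst. pose proof (H n ltac:(lia)); lra.
  assert (0 < sumR n f) by (apply IHn; [intros; apply H; lia| exists i; split; [lia|auto]]).
  pose proof (H n ltac:(lia)); lra. Qed.

Lemma sumR_nonneg n f : (forall i, (i < n)%nat -> 0 <= f i) -> 0 <= sumR n f.
Proof. intros H. rewrite <- (Rmult_0_r (INR n)), <- sumR_const; apply sumR_le; auto. Qed.

Lemma sumR_exists_pos n f : sumR n f = 1 -> exists i, (i < n)%nat /\ 0 < f i.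
Proof. intros H. destruct (Classical_Prop.classic (exists i, (i < n)%nat /\ 0 < f i)) as [|Hn]; auto.
  exfalso. assert (sumR n f <= sumR n (fun _ => 0)). apply sumR_le. intros i Hi.
  destruct (Rle_dec (f i) 0); auto. exfalso; apply Hn; exists i; split; auto; lra.
  rewrite sumR_const in H0. lra. Qed.

Definition bern (q : R) : Defs.dist := cons (1, q) (cons (0, 1 - q) nil).

Fixpoint G (K : nat) (pol : policy) (p r : nat -> nat -> R) (F : nat -> history -> R)
  (n t : nat) (h : history) : R :=
  match n with
  | O => F t h
  | S n' => sumR K (fun a => pol t h a *
      (r t a + (p t a * G K pol p r F n' (S t) (h ++ cons (a, 1) nil) +
               ((1 - p t a) * G K pol p r F n' (S t) (h ++ cons (a, 0) nil) + 0))))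
  end.

Lemma exp_reward_G K pol p mu n t h :
  exp_reward K pol mu (fun t a => bern (p t a)) n t h = G K pol p mu (fun _ _ => 0) n t h.
Proof. revert t h; induction n; intros t h; simpl; auto.
  apply sumR_ext; intros a _. rewrite !IHn. reflexivity. Qed.

Lemma G_lin K pol p r1 r2 F1 F2 x y n t h :
  G K pol p (fun t a => x * r1 t a + y * r2 t a) (fun t h => x * F1 t h + y * F2 t h) n t h
  = x * G K pol p r1 F1 n t h + y * G K pol p r2 F2 n t h.
Proof. revert t h; induction n; intros t h; simpl; auto.
  rewrite <- !sumR_scal, <- sumR_plus. apply sumR_ext; intros a _. rewrite !IHn. ring. Qed.

Lemma G_ext_range K pol p1 p2 r1 r2 F1 F2 n t h :
  (forall t' a, (t <= t' < t + n)%nat -> (a < K)%nat -> p1 t' a = p2 t' a /\ r1 t' a = r2 t' a) ->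
  (forall s, length s = n -> F1 (t + n)%nat (h ++ s) = F2 (t + n)%nat (h ++ s)) ->
  G K pol p1 r1 F1 n t h = G K pol p2 r2 F2 n t h.
Proof. revert t h; induction n; intros t h Hr HF; simpl.
  { specialize (HF nil eq_refl). rewrite Nat.add_0_r, app_nil_r in HF. auto. }
  apply sumR_ext; intros a Ha. destruct (Hr t a ltac:(lia) Ha) as [E1 E2]. rewrite E1, E2.
  rewrite (IHn (S t) (h ++ cons (a,1) nil)), (IHn (S t) (h ++ cons (a,0) nil)). reflexivity.
  all: try (intros; apply Hr; auto; lia).
  all: intros s Hs; replace (S t + n)%nat with (t + S n)%nat by lia; rewrite <- app_assoc; apply HF; simpl; lia.
Qed.

Lemma G_ext K pol p r1 r2 F1 F2 n t h :
  (forall t' a, (a < K)%nat -> r1 t' a = r2 t' a) -> (forall t' h', F1 t' h' = F2 t' h') ->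
  G K pol p r1 F1 n t h = G K pol p r2 F2 n t h.
Proof. intros. apply G_ext_range; auto. Qed.

Lemma G_const K pol p c d n t h : is_policy K pol ->
  G K pol p (fun _ _ => c) (fun _ _ => d) n t h = INR n * c + d.
Proof. intros Hpol. revert t h; induction n; intros t h; simpl G. simpl; lra.
  rewrite (sumR_ext _ _ (fun a => (c + (INR n * c + d)) * pol t h a)).
  rewrite sumR_scal. rewrite (proj2 (Hpol t h)), S_INR. ring.
  intros a _. rewrite !IHn. ring. Qed.

Lemma G_mono K pol p r1 r2 F1 F2 n t h : is_policy K pol -> (forall t a, 0 <= p t a <= 1) ->
  (forall t' a, (a < K)%nat -> r1 t' a <= r2 t' a) ->
  (forall s, length s = n -> F1 (t + n)%nat (h ++ s) <= F2 (t + n)%nat (h ++ s)) ->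
  G K pol p r1 F1 n t h <= G K pol p r2 F2 n t h.
Proof. intros Hpol Hp Hr. revert t h; induction n; intros t h HF; simpl.
  { specialize (HF nil eq_refl). rewrite Nat.add_0_r, app_nil_r in HF. auto. }
  apply sumR_le; intros a Ha. apply Rmult_le_compat_l. apply (proj1 (Hpol t h)); auto.
  assert (A1 : G K pol p r1 F1 n (S t) (h ++ cons (a,1) nil) <= G K pol p r2 F2 n (S t) (h ++ cons (a,1) nil)).
  { apply IHn. intros s Hs; replace (S t + n)%nat with (t + S n)%nat by lia; rewrite <- app_assoc; apply HF; simpl; lia. }
  assert (A0 : G K pol p r1 F1 n (S t) (h ++ cons (a,0) nil) <= G K pol p r2 F2 n (S t) (h ++ cons (a,0) nil)).
  { apply IHn. intros s Hs; replace (S t + n)%nat with (t + S n)%nat by lia; rewrite <- app_assoc; apply HF; simpl; lia. }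
  pose proof (Hr t a Ha). destruct (Hp t a).
  pose proof (Rmult_le_compat_l (p t a) _ _ H0 A1).
  assert (0 <= 1 - p t a) by lra. pose proof (Rmult_le_compat_l _ _ _ H3 A0). lra. Qed.

Lemma G_split K pol p r F n1 n2 t h :
  G K pol p r F (n1 + n2) t h = G K pol p r (fun t' h' => G K pol p r F n2 t' h') n1 t h.
Proof. revert t h; induction n1; intros t h; simpl; auto.
  apply sumR_ext; intros a _. rewrite !IHn1. reflexivity. Qed.

Lemma G_zero K pol p n t h : G K pol p (fun _ _ => 0) (fun _ _ => 0) n t h = 0.
Proof. revert t h; induction n; intros t h; simpl; auto.
  rewrite (sumR_ext _ _ (fun _ => 0 * 0)). rewrite sumR_scal; ring. intros; rewrite !IHn; ring. Qed.

Lemma G_sum K pol p m (r : nat -> nat -> nat -> R) (F : nat -> nat -> history -> R) n t h :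
  G K pol p (fun t a => sumR m (fun i => r i t a)) (fun t h => sumR m (fun i => F i t h)) n t h
  = sumR m (fun i => G K pol p (r i) (F i) n t h).
Proof. induction m; simpl. apply G_zero.
  rewrite <- IHm. rewrite <- (Rmult_1_l (G _ _ _ (fun t0 a => sumR m _) _ _ _ _)).
  rewrite <- (Rmult_1_l (G _ _ _ (r m) _ _ _ _)). rewrite <- G_lin. apply G_ext; intros; ring. Qed.

Lemma G_pos K pol p r F n t h : is_policy K pol -> (forall t a, 0 <= p t a <= 1) ->
  (forall t a, 0 <= r t a) -> (forall t h, 0 < F t h) -> 0 < G K pol p r F n t h.
Proof. intros Hpol Hp Hr HF. revert t h; induction n; intros t h; simpl; auto.
  destruct (sumR_exists_pos _ _ (proj2 (Hpol t h))) as [a0 [Ha0 Hpa0]].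
  assert (forall a, 0 < r t a + (p t a * G K pol p r F n (S t) (h ++ cons (a, 1) nil) +
    ((1 - p t a) * G K pol p r F n (S t) (h ++ cons (a, 0) nil) + 0))).
  { intros a. pose proof (IHn (S t) (h ++ cons (a,1) nil)). pose proof (IHn (S t) (h ++ cons (a,0) nil)).
    pose proof (Hr t a). destruct (Hp t a).
    destruct (Req_dec (p t a) 0) as [E|E]. rewrite E. nra. 
    assert (0 < p t a) by lra. nra. }
  apply sumR_pos. intros a Ha. apply Rmult_le_pos. apply (proj1 (Hpol t h)); auto. left; auto.
  exists a0. split; auto. apply Rmult_lt_0_compat; auto. Qed.

Definition cntN (j : nat) (h : history) : nat :=
  fold_right (fun x s => ((if Nat.eqb (fst x) j then 1 else 0) + s)%nat) 0%nat h.

Lemma cntN_app j h1 h2 : cntN j (h1 ++ h2) = (cntN j h1 + cntN j h2)%nat.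
Proof. induction h1; simpl; auto. rewrite IHh1; lia. Qed.

Lemma cntN_le j s : (cntN j s <= length s)%nat.
Proof. induction s; simpl; auto. destruct (Nat.eqb (fst a) j); lia. Qed.

Definition indic (j a : nat) : R := if Nat.eqb a j then 1 else 0.

Lemma G_count K pol p j n t h : is_policy K pol ->
  G K pol p (fun _ a => indic j a) (fun _ _ => 0) n t h + INR (cntN j h)
  = G K pol p (fun _ _ => 0) (fun _ h' => INR (cntN j h')) n t h.
Proof. intros Hpol. revert t h; induction n; intros t h; simpl G. lra.
  replace (INR (cntN j h)) with (INR (cntN j h) * sumR K (pol t h)) by (rewrite (proj2 (Hpol t h)); ring).
  rewrite <- sumR_scal, <- sumR_plus.
  apply sumR_ext; intros a _.
  rewrite <- (IHn (S t) (h ++ cons (a,1) nil)), <- (IHn (S t) (h ++ cons (a,0) nil)).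
  rewrite !cntN_app. simpl. unfold indic. rewrite plus_INR. destruct (Nat.eqb a j); simpl; ring. Qed.

Lemma INR_thresh n x : (x <= n)%nat -> INR x = sumR n (fun k => if Nat.ltb k x then 1 else 0).
Proof. assert (Hall : forall n x, (n <= x)%nat -> sumR n (fun k => if Nat.ltb k x then 1 else 0) = INR n).
  { induction n0; intros; cbn [sumR]; auto. rewrite IHn0 by lia. destruct (Nat.ltb_spec n0 x0); [|lia]. rewrite S_INR; ring. }
  induction n; intros H. { replace x with 0%nat by lia. reflexivity. }
  destruct (Nat.eq_dec x (S n)). { subst. rewrite Hall; auto. }
  cbn [sumR]. rewrite <- IHn by lia. destruct (Nat.ltb_spec n x); [lia|]. ring. Qed.

Definition Ik (j c0 k : nat) (t : nat) (h : history) : R :=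
  if Nat.ltb (c0 + k) (cntN j h) then 1 else 0.

Lemma G_count_thresh K pol p j n t h : is_policy K pol ->
  G K pol p (fun _ a => indic j a) (fun _ _ => 0) n t h
  = sumR n (fun k => G K pol p (fun _ _ => 0) (Ik j (cntN j h) k) n t h).
Proof. intros Hpol. pose proof (G_count K pol p j n t h Hpol).
  assert (E: G K pol p (fun _ _ => 0) (fun _ h' => INR (cntN j h')) n t h =
     G K pol p (fun t a => 1 * 0 + 1 * sumR n (fun k => 0))
       (fun t h' => 1 * INR (cntN j h) + 1 * sumR n (fun k => Ik j (cntN j h) k t h')) n t h).
  { apply G_ext_range. intros; rewrite sumR_const; split; ring.
    intros s Hs. rewrite cntN_app, plus_INR. rewrite (INR_thresh n (cntN j s)) by (rewrite <- Hs; apply cntN_le).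
    rewrite Rmult_1_l, Rmult_1_l. f_equal. apply sumR_ext; intros k _. unfold Ik. rewrite cntN_app.
    destruct (Nat.ltb_spec k (cntN j s)); destruct (Nat.ltb_spec (cntN j h + k) (cntN j h + cntN j s)); auto; lia. }
  rewrite E, G_lin, G_const, G_sum in H by auto. lra. Qed.

Lemma ln_le_sub1 x : 0 < x -> ln x <= x - 1.
Proof. intros Hx. destruct (Req_dec (ln x) 0) as [E|E].
  - rewrite E. assert (x = 1). { rewrite <- (exp_ln x Hx), E, exp_0. auto. } lra.
  - pose proof (exp_ineq1 _ E). rewrite exp_ln in H by auto. lra. Qed.

Lemma ln_le_aux y S : 0 < y -> 0 < S -> ln y <= ln S + y / S - 1.
Proof. intros Hy HS. pose proof (ln_le_sub1 (y / S) ltac:(apply Rdiv_lt_0_compat; auto)).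
  rewrite ln_div in H by auto. lra. Qed.

Lemma DV K pol p0 p1 g n t h : is_policy K pol ->
  (forall t a, 0 < p0 t a < 1) -> (forall t a, 0 < p1 t a < 1) ->
  G K pol p0 (fun _ _ => 0) g n t h -
  G K pol p0 (fun t a => p0 t a * ln (p0 t a / p1 t a) + (1 - p0 t a) * ln ((1 - p0 t a) / (1 - p1 t a)))
     (fun _ _ => 0) n t h
  <= ln (G K pol p1 (fun _ _ => 0) (fun t h => exp (g t h)) n t h).
Proof. intros Hpol Hp0 Hp1. revert t h; induction n; intros t h.
  { simpl. rewrite ln_exp. lra. }
  assert (Hp1' : forall t a, 0 <= p1 t a <= 1) by (intros t0 a; specialize (Hp1 t0 a); lra).
  set (Sv := G K pol p1 (fun _ _ => 0) (fun t h => exp (g t h)) (S n) t h).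
  assert (HS : 0 < Sv) by (apply G_pos; auto; intros; [lra| apply exp_pos]).
  assert (HS2 : Sv = sumR K (fun a => pol t h a * (0 + (p1 t a *
      G K pol p1 (fun _ _ => 0) (fun t h => exp (g t h)) n (S t) (h ++ cons (a, 1) nil) +
      ((1 - p1 t a) * G K pol p1 (fun _ _ => 0) (fun t h => exp (g t h)) n (S t) (h ++ cons (a, 0) nil) + 0)))))
    by reflexivity.
  simpl G.
  apply Rle_trans with (sumR K (fun a => pol t h a * (ln Sv - 1 + (p1 t a *
      G K pol p1 (fun _ _ => 0) (fun t h => exp (g t h)) n (S t) (h ++ cons (a, 1) nil) +
      ((1 - p1 t a) * G K pol p1 (fun _ _ => 0) (fun t h => exp (g t h)) n (S t) (h ++ cons (a, 0) nil))) / Sv))).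
  - match goal with |- sumR K ?f - sumR K ?g <= _ =>
      replace (sumR K f - sumR K g) with (sumR K (fun a => f a + (-1) * g a)) by (rewrite sumR_plus, sumR_scal; ring) end.
    apply sumR_le; intros a Ha.
    cbv beta. pose proof (proj1 (Hpol t h) a Ha) as Hpa.
    set (Z1 := G K pol p1 (fun _ _ => 0) (fun t h => exp (g t h)) n (S t) (h ++ cons (a, 1) nil)).
    set (Z0 := G K pol p1 (fun _ _ => 0) (fun t h => exp (g t h)) n (S t) (h ++ cons (a, 0) nil)).
    pose proof (IHn (S t) (h ++ cons (a, 1) nil)) as I1. pose proof (IHn (S t) (h ++ cons (a, 0) nil)) as I0.
    fold Z1 in I1. fold Z0 in I0.
    assert (HZ1 : 0 < Z1) by (apply G_pos; auto; intros; [lra| apply exp_pos]).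
    assert (HZ0 : 0 < Z0) by (apply G_pos; auto; intros; [lra| apply exp_pos]).
    destruct (Hp0 t a) as [q0a q0b]. destruct (Hp1 t a) as [q1a q1b].
    pose proof (ln_le_aux (p1 t a * Z1 / p0 t a) Sv ltac:(apply Rdiv_lt_0_compat; [apply Rmult_lt_0_compat|]; lra) HS) as L1.
    pose proof (ln_le_aux ((1 - p1 t a) * Z0 / (1 - p0 t a)) Sv ltac:(apply Rdiv_lt_0_compat; [apply Rmult_lt_0_compat|]; lra) HS) as L0.
    rewrite ln_div, ln_mult in L1 by (try apply Rmult_lt_0_compat; lra).
    rewrite ln_div, ln_mult in L0 by (try apply Rmult_lt_0_compat; lra).
    rewrite (ln_div (p0 t a)), (ln_div (1 - p0 t a)) by lra.
    assert (E1 : p0 t a * (p1 t a * Z1 / p0 t a / Sv) = p1 t a * Z1 / Sv) by (field; lra).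
    assert (E0 : (1 - p0 t a) * ((1 - p1 t a) * Z0 / (1 - p0 t a) / Sv) = (1 - p1 t a) * Z0 / Sv) by (field; lra).
    assert (Ed : (p1 t a * Z1 + (1 - p1 t a) * Z0) / Sv = p1 t a * Z1 / Sv + (1 - p1 t a) * Z0 / Sv) by (field; lra).
    rewrite Ed, <- E1, <- E0.
    apply Rmult_le_compat_l with (r := p0 t a) in L1; [|lra].
    apply Rmult_le_compat_l with (r := 1 - p0 t a) in L0; [|lra].
    apply Rmult_le_compat_l with (r := p0 t a) in I1; [|lra].
    apply Rmult_le_compat_l with (r := 1 - p0 t a) in I0; [|lra].
    match goal with |- _ <= pol t h a * ?Y =>
      apply Rle_trans with (pol t h a * (p0 t a * (G K pol p0 (fun _ _ => 0) g n (S t) (h ++ cons (a, 1) nil) -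
        G K pol p0 (fun t a => p0 t a * ln (p0 t a / p1 t a) + (1 - p0 t a) * ln ((1 - p0 t a) / (1 - p1 t a))) (fun _ _ => 0) n (S t) (h ++ cons (a, 1) nil))
       + (1 - p0 t a) * (G K pol p0 (fun _ _ => 0) g n (S t) (h ++ cons (a, 0) nil) -
        G K pol p0 (fun t a => p0 t a * ln (p0 t a / p1 t a) + (1 - p0 t a) * ln ((1 - p0 t a) / (1 - p1 t a))) (fun _ _ => 0) n (S t) (h ++ cons (a, 0) nil))
       - (p0 t a * (ln (p0 t a) - ln (p1 t a)) + (1 - p0 t a) * (ln (1 - p0 t a) - ln (1 - p1 t a)))));
      [right; ring| apply Rmult_le_compat_l; [auto|lra]] end.
  - rewrite (sumR_ext _ _ (fun a => (ln Sv - 1) * pol t h a + / Sv * (pol t h a * (0 + (p1 t a *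
      G K pol p1 (fun _ _ => 0) (fun t h => exp (g t h)) n (S t) (h ++ cons (a, 1) nil) +
      ((1 - p1 t a) * G K pol p1 (fun _ _ => 0) (fun t h => exp (g t h)) n (S t) (h ++ cons (a, 0) nil) + 0)))))).
    rewrite sumR_plus, !sumR_scal, <- HS2, (proj2 (Hpol t h)). right; field; lra.
    intros a _. field; lra.
Qed.

Definition klb (a b : R) : R := a * ln (a / b) + (1 - a) * ln ((1 - a) / (1 - b)).

Lemma pinsker_bin a b : 0 <= a -> a < b -> b < 1 -> 2 * (b - a) ^ 2 <= klb a b.
Proof. intros Ha Hab Hb. unfold klb. destruct (Req_dec a 0) as [E|E].
  - subst a. set (f := fun x => - ln (1 - x) - 2 * x ^ 2).
    assert (D : forall x, 0 <= x <= b -> derivable_pt_lim f x (1 / (1 - x) - 4 * x)).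
    { intros x Hx. apply is_derive_Reals. unfold f. auto_derive. lra. field. lra. }
    destruct (MVT_cor2 f (fun x => 1 / (1 - x) - 4 * x) 0 b Hab D) as [c [Hc Hc2]].
    assert (0 <= 1 / (1 - c) - 4 * c).
    { replace (1 / (1 - c) - 4 * c) with ((1 - 2 * c) ^ 2 / (1 - c)) by (field; lra).
      apply Rdiv_le_0_compat. apply pow2_ge_0. lra. }
    unfold f in Hc. replace (1 - 0) with 1 in Hc by ring. rewrite ln_1 in Hc.
    replace ((1 - 0) / (1 - b)) with (/ (1 - b)) by (field; lra). rewrite ln_Rinv by lra.
    rewrite Rmult_0_l. assert (0 <= (1 / (1 - c) - 4 * c) * (b - 0)) by (apply Rmult_le_pos; lra). nra.
  - assert (Ha' : 0 < a) by lra.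
    set (f := fun x => a * ln (a / x) + (1 - a) * ln ((1 - a) / (1 - x)) - 2 * (x - a) ^ 2).
    assert (D : forall x, a <= x <= b -> derivable_pt_lim f x (- a / x + (1 - a) / (1 - x) - 4 * (x - a))).
    { intros x Hx. apply is_derive_Reals. unfold f. auto_derive.
      repeat split; try lra. apply Rmult_lt_0_compat; [lra| apply Rinv_0_lt_compat; lra].
      apply Rmult_lt_0_compat; [lra| apply Rinv_0_lt_compat; lra].
      field. repeat split; lra. }
    destruct (MVT_cor2 f _ a b Hab D) as [c [Hc Hc2]].
    assert (0 <= - a / c + (1 - a) / (1 - c) - 4 * (c - a)).
    { replace (- a / c + (1 - a) / (1 - c) - 4 * (c - a)) with ((c - a) * (1 - 2 * c) ^ 2 / (c * (1 - c))) by (field; lra).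
      apply Rdiv_le_0_compat. apply Rmult_le_pos; [lra|apply pow2_ge_0]. apply Rmult_lt_0_compat; lra. }
    unfold f in Hc. rewrite !Rdiv_diag in Hc by lra. rewrite ln_1 in Hc. nra.
Qed.

Lemma binP a b D : 0 <= a <= 1 -> 0 <= b <= 1 ->
  (forall al be, al * a + be * (1 - a) - D <= ln (exp al * b + exp be * (1 - b))) ->
  b - a <= sqrt (D / 2).
Proof. intros Ha Hb H. destruct (Rle_dec b a). { pose proof (sqrt_pos (D/2)); lra. }
  assert (Hab : a < b) by lra.
  assert (Hb1 : b < 1).
  { destruct (Req_dec b 1) as [E|E]; [|lra]. exfalso. subst b.
    specialize (H 0 ((D + 1) / (1 - a))). rewrite exp_0 in H.
    replace (1 * 1 + exp ((D + 1) / (1 - a)) * (1 - 1)) with 1 in H by ring. rewrite ln_1 in H.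
    replace ((D + 1) / (1 - a) * (1 - a)) with (D + 1) in H by (field; lra). lra. }
  assert (Hkl : klb a b <= D).
  { destruct (Req_dec a 0) as [E|E].
    - subst a. unfold klb. rewrite Rmult_0_l, Rplus_0_l. replace (1 - 0) with 1 by ring. rewrite Rmult_1_l.
      destruct (Rle_dec (ln (1 / (1 - b))) D) as [|Hn]; auto. exfalso.
      set (dl := ln (1 / (1 - b)) - D). assert (Hd : 0 < dl) by (unfold dl; lra).
      pose proof (exp_ineq1 dl ltac:(lra)).
      specialize (H (ln ((exp dl - 1) / (2 * b))) (ln (1 / (1 - b)))).
      rewrite !exp_ln in H. 2: apply Rdiv_lt_0_compat; lra. 2: apply Rdiv_lt_0_compat; lra.
      replace ((exp dl - 1) / (2 * b) * b + 1 / (1 - b) * (1 - b)) with ((exp dl + 1) / 2) in H by (field; lra).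
      assert (ln ((exp dl + 1) / 2) < ln (exp dl)) by (apply ln_increasing; lra).
      rewrite ln_exp in H1. unfold dl in H, H1. lra.
    - specialize (H (ln (a / b)) (ln ((1 - a) / (1 - b)))).
      rewrite !exp_ln in H. 2: apply Rdiv_lt_0_compat; lra. 2: apply Rdiv_lt_0_compat; lra.
      replace (a / b * b + (1 - a) / (1 - b) * (1 - b)) with 1 in H by (field; lra).
      rewrite ln_1 in H. unfold klb. lra. }
  pose proof (pinsker_bin a b ltac:(lra) Hab Hb1).
  rewrite <- (sqrt_pow2 (b - a)) by lra. apply sqrt_le_1_alt. lra.
Qed.

Lemma ln43_pos : 0 < ln (4/3).
Proof. rewrite <- ln_1. apply ln_increasing; lra. Qed.

Lemma ln43_lt1 : ln (4/3) < 1.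
Proof. apply Rlt_le_trans with (ln (exp 1)). apply ln_increasing. lra.
  pose proof (exp_ineq1 1 ltac:(lra)). lra. rewrite ln_exp; lra. Qed.

Lemma chord x : 0 <= x <= 1/4 -> - ln (1 - x) <= 4 * ln (4/3) * x.
Proof. intros Hx. set (L := ln (4/3)).
  set (psi := fun x => 4 * L * x + ln (1 - x)).
  assert (D : forall y, y < 1 -> derivable_pt_lim psi y (4 * L - 1 / (1 - y))).
  { intros y Hy. apply is_derive_Reals. unfold psi. auto_derive. lra. field. lra. }
  assert (P0 : psi 0 = 0) by (unfold psi; cbv beta; rewrite Rminus_0_r, ln_1; ring).
  assert (P1 : psi (1/4) = 0).
  { unfold psi, L; cbv beta. replace (1 - 1/4) with (/ (4/3)) by field. rewrite ln_Rinv by lra. field. }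
  assert (psi x >= 0).
  { destruct (Req_dec x 0) as [E|E]. subst; lra.
    destruct (Req_dec x (1/4)) as [E2|E2]. subst; lra.
    destruct (Rle_dec 0 (4 * L - 1 / (1 - x))).
    - destruct (MVT_cor2 psi _ 0 x ltac:(lra) ltac:(intros; apply D; lra)) as [c [Hc Hc2]].
      assert (1 / (1 - c) <= 1 / (1 - x)) by (apply Rmult_le_compat_l; [lra| apply Rinv_le_contravar; lra]).
      nra.
    - destruct (MVT_cor2 psi _ x (1/4) ltac:(lra) ltac:(intros; apply D; lra)) as [c [Hc Hc2]].
      assert (1 / (1 - x) <= 1 / (1 - c)) by (apply Rmult_le_compat_l; [lra| apply Rinv_le_contravar; lra]).
      nra. }
  unfold psi in H. lra.
Qed.

Definition pj (eps : R) (j : nat) : nat -> nat -> R := fun _ a => 1/2 + eps * indic j a.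
Definition p0 : nat -> nat -> R := fun _ _ => 1/2.

Lemma ind01 j a : indic j a = 0 \/ indic j a = 1.
Proof. unfold indic; destruct (Nat.eqb a j); auto. Qed.

Lemma Ik01 j c k t h : Ik j c k t h = 0 \/ Ik j c k t h = 1.
Proof. unfold Ik; destruct (Nat.ltb _ _); auto. Qed.

Lemma G_nonneg K pol p r F n t h : is_policy K pol -> (forall t a, 0 <= p t a <= 1) ->
  (forall t a, 0 <= r t a) -> (forall t h, 0 <= F t h) -> 0 <= G K pol p r F n t h.
Proof. intros. rewrite <- (G_zero K pol p n t h). apply G_mono; auto. Qed.

Lemma G_01 K pol p F n t h : is_policy K pol -> (forall t a, 0 <= p t a <= 1) ->
  (forall t h, 0 <= F t h <= 1) -> 0 <= G K pol p (fun _ _ => 0) F n t h <= 1.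
Proof. intros Hpol Hp HF. split.
  - apply G_nonneg; auto. intros; lra. intros; apply HF.
  - assert (G K pol p (fun _ _ => 0) F n t h <= G K pol p (fun _ _ => 0) (fun _ _ => 1) n t h).
    { apply G_mono; auto. intros; lra. intros; apply HF. }
    rewrite G_const in H by auto. lra. Qed.

Lemma G_affine0 K pol p F x y n t h : is_policy K pol ->
  G K pol p (fun _ _ => 0) (fun t h => x * F t h + y) n t h = x * G K pol p (fun _ _ => 0) F n t h + y.
Proof. intros Hpol.
  rewrite (G_ext K pol p _ (fun t a => x * 0 + 1 * 0) _ (fun t h => x * F t h + 1 * y)) by (intros; ring).
  rewrite G_lin, G_const by auto. ring. Qed.

Definition kl0 (eps : R) := - (1/2) * ln (1 - 4 * eps ^ 2).

Lemma per_k K pol eps j L t h c k : is_policy K pol -> 0 <= eps <= 1/4 ->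
  G K pol (pj eps j) (fun _ _ => 0) (Ik j c k) L t h - G K pol p0 (fun _ _ => 0) (Ik j c k) L t h
  <= sqrt (kl0 eps * G K pol p0 (fun _ a => indic j a) (fun _ _ => 0) L t h / 2).
Proof. intros Hpol He.
  assert (Hp0 : forall t a, 0 < p0 t a < 1) by (intros; unfold p0; lra).
  assert (Hp1 : forall t a, 0 < pj eps j t a < 1) by (intros; unfold pj; destruct (ind01 j a) as [E|E]; rewrite E; lra).
  assert (Hp0' : forall t a, 0 <= p0 t a <= 1) by (intros t0 a; specialize (Hp0 t0 a); lra).
  assert (Hp1' : forall t a, 0 <= pj eps j t a <= 1) by (intros t0 a; specialize (Hp1 t0 a); lra).
  set (I := Ik j c k).
  apply binP.
  - apply G_01; auto. intros; unfold I; destruct (Ik01 j c k t0 h0) as [E|E]; rewrite E; lra.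
  - apply G_01; auto. intros; unfold I; destruct (Ik01 j c k t0 h0) as [E|E]; rewrite E; lra.
  - intros al be.
    pose proof (DV K pol p0 (pj eps j) (fun t h => (al - be) * I t h + be) L t h Hpol Hp0 Hp1) as H.
    rewrite G_affine0 in H by auto.
    rewrite (G_ext K pol (pj eps j) (fun _ _ => 0) (fun _ _ => 0) (fun t h => exp ((al - be) * I t h + be)) (fun t h => (exp al - exp be) * I t h + exp be)) in H.
    2: intros; reflexivity.
    2: { intros. unfold I. destruct (Ik01 j c k t' h') as [E|E]; rewrite E.
         rewrite Rmult_0_r, Rplus_0_l, Rmult_0_r, Rplus_0_l; auto. rewrite !Rmult_1_r. replace (al - be + be) with al by ring. ring. }
    rewrite G_affine0 in H by auto.
    rewrite (G_ext K pol p0 (fun t a => p0 t a * ln (p0 t a / pj eps j t a) + (1 - p0 t a) * ln ((1 - p0 t a) / (1 - pj eps j t a))) (fun t a => kl0 eps * indic j a + 0 * 0) (fun _ _ => 0) (fun t h => kl0 eps * 0 + 0 * 0)) in H.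
    2: { intros t' a _. unfold p0, pj, kl0. destruct (ind01 j a) as [E|E]; rewrite E.
         replace (1/2 + eps * 0) with (1/2) by ring. rewrite Rdiv_diag by lra. rewrite Rdiv_diag by lra. rewrite ln_1. lra.
         replace (1 / 2 / (1 / 2 + eps * 1)) with (/ (1 + 2 * eps)) by (field; lra).
         replace ((1 - 1 / 2) / (1 - (1 / 2 + eps * 1))) with (/ (1 - 2 * eps)) by (field; lra).
         rewrite !ln_Rinv by lra. replace (1 - 4 * eps ^ 2) with ((1 + 2 * eps) * (1 - 2 * eps)) by ring.
         rewrite ln_mult by lra. field. }
    2: intros; ring.
    rewrite G_lin, G_zero in H.
    match goal with |- _ <= ln ?X => replace X with ((exp al - exp be) * G K pol (pj eps j) (fun _ _ => 0) I L t h + exp be) by ring end.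
    lra.
Qed.

Lemma per_j K pol eps j L t h : is_policy K pol -> 0 <= eps <= 1/4 ->
  G K pol (pj eps j) (fun _ a => indic j a) (fun _ _ => 0) L t h <=
  G K pol p0 (fun _ a => indic j a) (fun _ _ => 0) L t h +
  INR L * sqrt (kl0 eps * G K pol p0 (fun _ a => indic j a) (fun _ _ => 0) L t h / 2).
Proof. intros Hpol He.
  rewrite (G_count_thresh K pol (pj eps j) j L t h Hpol).
  rewrite (G_count_thresh K pol p0 j L t h Hpol) at 1.
  rewrite <- sumR_const, <- sumR_plus.
  apply sumR_le. intros k _.
  pose proof (per_k K pol eps j L t h (cntN j h) k Hpol He). lra. Qed.

Lemma CS n y : (sumR n y) ^ 2 <= INR n * sumR n (fun i => y i ^ 2).
Proof. induction n. simpl; lra.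
  cbn [sumR]. rewrite S_INR.
  assert (2 * sumR n y * y n <= sumR n (fun i => y i ^ 2) + INR n * y n ^ 2).
  { rewrite <- sumR_const, <- sumR_plus. replace (2 * sumR n y * y n) with (sumR n (fun i => 2 * y n * y i)).
    apply sumR_le. intros i _; cbv beta; pose proof (pow2_ge_0 (y i - y n)); nra. rewrite sumR_scal; ring. }
  nra. Qed.

Lemma sum_sqrt n x : (forall i, (i < n)%nat -> 0 <= x i) ->
  sumR n (fun i => sqrt (x i)) <= sqrt (INR n * sumR n x).
Proof. intros Hx. rewrite <- (sqrt_pow2 (sumR n (fun i => sqrt (x i)))).
  apply sqrt_le_1_alt. eapply Rle_trans. apply CS. apply Rmult_le_compat_l. apply pos_INR.
  right. apply sumR_ext. intros. rewrite <- Rsqr_pow2, Rsqr_sqrt; auto.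
  apply sumR_nonneg. intros; apply sqrt_pos. Qed.

Lemma sum_indic K a : (a < K)%nat -> sumR K (fun j => indic j a) = 1.
Proof. induction K; intros Ha. lia. cbn [sumR].
  destruct (Nat.eq_dec a K). subst.
  - rewrite (sumR_ext _ _ (fun _ => 0)). rewrite sumR_const. unfold indic. rewrite Nat.eqb_refl. ring.
    intros i Hi. unfold indic. destruct (Nat.eqb_spec K i); auto. lia.
  - rewrite IHK by lia. unfold indic. destruct (Nat.eqb_spec a K); [lia|]. ring. Qed.

Lemma kl0_nonneg eps : 0 <= eps <= 1/4 -> 0 <= kl0 eps.
Proof. intros He. unfold kl0. assert (ln (1 - 4 * eps ^ 2) <= 0).
  rewrite <- ln_1. apply ln_le; nra. nra. Qed.

Lemma block_sum K pol eps L t h : is_policy K pol -> 0 <= eps <= 1/4 ->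
  sumR K (fun j => G K pol (pj eps j) (fun _ a => indic j a) (fun _ _ => 0) L t h) <=
  INR L + INR L * sqrt (kl0 eps / 2) * sqrt (INR K * INR L).
Proof. intros Hpol He.
  assert (Hp0 : forall t a, 0 <= p0 t a <= 1) by (intros; unfold p0; lra).
  assert (Hsum : sumR K (fun j => G K pol p0 (fun _ a => indic j a) (fun _ _ => 0) L t h) = INR L).
  { rewrite <- G_sum. rewrite (G_ext K pol p0 _ (fun _ _ => 1) _ (fun _ _ => 0)).
    rewrite G_const by auto. ring. intros; apply sum_indic; auto. intros; rewrite sumR_const; ring. }
  eapply Rle_trans. apply sumR_le. intros j _. apply per_j; auto.
  rewrite sumR_plus, Hsum. apply Rplus_le_compat_l.
  rewrite sumR_scal, Rmult_assoc. apply Rmult_le_compat_l. apply pos_INR.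
  rewrite (sumR_ext _ _ (fun j => sqrt (kl0 eps / 2) * sqrt (G K pol p0 (fun _ a => indic j a) (fun _ _ => 0) L t h))).
  rewrite sumR_scal. apply Rmult_le_compat_l. apply sqrt_pos.
  rewrite <- Hsum. apply sum_sqrt. intros; apply G_nonneg; auto. intros; unfold indic; destruct (Nat.eqb _ _); lra. intros; lra.
  intros j _. rewrite <- sqrt_mult. f_equal. field. pose proof (kl0_nonneg eps He); lra.
  apply G_nonneg; auto. intros; unfold indic; destruct (Nat.eqb _ _); lra. intros; lra.
Qed.

Definition consf (j : nat) (J : nat -> nat) : nat -> nat :=
  fun i => match i with O => j | S i' => J i' end.
Definition upd (J : nat -> nat) (b j : nat) : nat -> nat :=
  fun i => if Nat.eqb i b then j else J i.

Fixpoint avgS (K n : nat) (Phi : (nat -> nat) -> R) : R :=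
  match n with
  | O => Phi (fun _ => O)
  | S n' => sumR K (fun j => avgS K n' (fun J => Phi (consf j J)))
  end.

Lemma avgS_lin K n Phi1 Phi2 x y :
  avgS K n (fun J => x * Phi1 J + y * Phi2 J) = x * avgS K n Phi1 + y * avgS K n Phi2.
Proof. revert Phi1 Phi2; induction n; intros; simpl; auto.
  rewrite <- !sumR_scal, <- sumR_plus. apply sumR_ext; intros. apply IHn. Qed.

Lemma avgS_ext K n Phi1 Phi2 : (forall J, Phi1 J = Phi2 J) -> avgS K n Phi1 = avgS K n Phi2.
Proof. intros H. replace Phi1 with Phi2; auto. apply functional_extensionality; auto. Qed.

Lemma avgS_const K n c : avgS K n (fun _ => c) = INR K ^ n * c.
Proof. induction n; simpl. ring. rewrite IHn, sumR_const. ring. Qed.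

Lemma avgS_mono K n Phi1 Phi2 : (forall J, Phi1 J <= Phi2 J) -> avgS K n Phi1 <= avgS K n Phi2.
Proof. revert Phi1 Phi2; induction n; intros Phi1 Phi2 H; simpl; auto.
  apply sumR_le; intros. apply IHn; auto. Qed.

Lemma avgS_sum K n m (Phi : nat -> (nat -> nat) -> R) :
  avgS K n (fun J => sumR m (fun b => Phi b J)) = sumR m (fun b => avgS K n (Phi b)).
Proof. induction m; simpl.
  - rewrite avgS_const. ring.
  - rewrite <- IHm. rewrite <- (Rmult_1_l (avgS K n (fun J => sumR m _))), <- (Rmult_1_l (avgS K n (Phi m))).
    rewrite <- avgS_lin. apply avgS_ext; intros; ring. Qed.

Lemma avgS_coord K n b Phi U : (b < n)%nat ->
  (forall J, sumR K (fun j => Phi (upd J b j)) <= U) -> avgS K n Phi <= INR K ^ (n - 1) * U.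
Proof. revert b Phi; induction n; intros b Phi Hb H. lia.
  destruct b.
  - simpl avgS. rewrite <- avgS_sum. replace (S n - 1)%nat with n by lia.
    rewrite <- avgS_const. apply avgS_mono. intros J.
    eapply Rle_trans; [|apply (H (consf 0 J))]. right. apply sumR_ext. intros j _. f_equal.
    apply functional_extensionality. intros [|i]; reflexivity.
  - simpl avgS. destruct n. lia.
    eapply Rle_trans. apply sumR_le. intros j _. apply (IHn b). lia.
    intros J. eapply Rle_trans; [|apply (H (consf j J))]. right. apply sumR_ext. intros i _. f_equal.
    apply functional_extensionality. intros [|i']; unfold upd; simpl; auto.
    rewrite sumR_const. replace (S (S n) - 1)%nat with (S n) by lia. replace (S n - 1)%nat with n by lia.
    simpl pow. right; ring. Qed.

Lemma exists_le_avg K f : (1 <= K)%nat -> exists j, (j < K)%nat /\ INR K * f j <= sumR K f.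
Proof. intros HK. destruct (Classical_Prop.classic (exists j, (j < K)%nat /\ INR K * f j <= sumR K f)) as [|Hn]; auto.
  exfalso. assert (forall j, (j < K)%nat -> sumR K f < INR K * f j).
  { intros j Hj. destruct (Rlt_le_dec (sumR K f) (INR K * f j)); auto. exfalso; apply Hn; eauto. }
  assert (forall n, (1 <= n <= K)%nat -> sumR n (fun _ => sumR K f) < sumR n (fun j => INR K * f j)).
  { induction n; intros Hn'. lia. destruct n. simpl. specialize (H 0%nat ltac:(lia)). lra.
    specialize (IHn ltac:(lia)). specialize (H (S n) ltac:(lia)). change (sumR (S (S n)) ?g) with (sumR (S n) g + g (S n)). lra. }
  specialize (H0 K ltac:(lia)). rewrite sumR_const, sumR_scal in H0. lra. Qed.

Lemma avgS_exists K n Phi : (1 <= K)%nat ->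
  exists J, (forall i, (J i < K)%nat) /\ INR K ^ n * Phi J <= avgS K n Phi.
Proof. intros HK. revert Phi; induction n; intros Phi.
  - exists (fun _ => O). split. intros; lia. simpl; lra.
  - simpl avgS. destruct (exists_le_avg K (fun j => avgS K n (fun J => Phi (consf j J))) HK) as [j [Hj Hle]].
    destruct (IHn (fun J => Phi (consf j J))) as [J [HJ HJle]].
    exists (consf j J). split. intros [|i]; simpl; auto.
    simpl pow. eapply Rle_trans; [|apply Hle].
    rewrite Rmult_assoc. apply Rmult_le_compat_l. apply pos_INR. auto. Qed.

Definition blk (L t : nat) : nat := ((t - 1) / L)%nat.
Definition hit (L : nat) (J : nat -> nat) (b t a : nat) : R :=
  if Nat.eqb (blk L t) b then indic (J b) a else 0.
Definition muE (L B : nat) (eps : R) (J : nat -> nat) (t a : nat) : R :=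
  1/2 + eps * sumR B (fun b => hit L J b t a).
Definition Phi K pol T L B eps b J :=
  G K pol (muE L B eps J) (hit L J b) (fun _ _ => 0) T 1 nil.

Lemma sum_sel B x (f : nat -> R) :
  sumR B (fun b => if Nat.eqb x b then f b else 0) = if Nat.ltb x B then f x else 0.
Proof. induction B; simpl. destruct (Nat.ltb_spec x 0); [lia|auto].
  rewrite IHB. destruct (Nat.ltb_spec x B); destruct (Nat.eqb_spec x B); destruct (Nat.ltb_spec x (S B)); subst; try lia; ring. Qed.

Lemma sum_hit L J B t a : sumR B (fun b => hit L J b t a) = if Nat.ltb (blk L t) B then indic (J (blk L t)) a else 0.
Proof. unfold hit. apply (sum_sel B (blk L t) (fun b => indic (J b) a)). Qed.

Lemma muE_01 L B eps J t a : 0 <= eps <= 1/4 -> 0 <= muE L B eps J t a <= 1.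
Proof. intros He. unfold muE. rewrite sum_hit. destruct (Nat.ltb _ _); [destruct (ind01 (J (blk L t)) a) as [E|E]; rewrite E|]; lra. Qed.

Lemma blk_eq L b t : (1 <= L)%nat -> (1 + b * L <= t < 1 + b * L + L)%nat -> blk L t = b.
Proof. intros HL Ht. unfold blk. symmetry. apply (Nat.div_unique _ _ _ (t - 1 - b * L)); nia. Qed.

Lemma blk_lt L b t : (1 <= L)%nat -> (1 <= t < 1 + b * L)%nat -> (blk L t < b)%nat.
Proof. intros HL Ht. unfold blk. apply Nat.Div0.div_lt_upper_bound. nia. Qed.

Lemma blk_ge L b t : (1 <= L)%nat -> (1 + b * L + L <= t)%nat -> (b < blk L t)%nat.
Proof. intros HL Ht. unfold blk. apply Nat.div_le_lower_bound. lia. nia. Qed.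

Lemma block_avg K pol T L B eps b J : is_policy K pol -> 0 <= eps <= 1/4 -> (1 <= L)%nat ->
  (b < B)%nat -> (B * L <= T)%nat ->
  sumR K (fun j => Phi K pol T L B eps b (upd J b j)) <=
  INR L + INR L * sqrt (kl0 eps / 2) * sqrt (INR K * INR L).
Proof. intros Hpol He HL Hb HT.
  set (U := INR L + INR L * sqrt (kl0 eps / 2) * sqrt (INR K * INR L)).
  set (rest := (T - b * L - L)%nat).
  assert (ET : T = (b * L + (L + rest))%nat) by (unfold rest; nia).
  unfold Phi. rewrite ET.
  rewrite (sumR_ext _ _ (fun j => G K pol (muE L B eps J) (fun _ _ => 0)
     (fun t' h' => G K pol (pj eps j) (fun _ a => indic j a) (fun _ _ => 0) L t' h') (b * L) 1 nil)).
  - rewrite <- (G_sum K pol (muE L B eps J) K (fun _ _ _ => 0)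
       (fun j t' h' => G K pol (pj eps j) (fun _ a => indic j a) (fun _ _ => 0) L t' h')).
    eapply Rle_trans. apply G_mono with (r2 := fun _ _ => 0) (F2 := fun _ _ => U); auto.
    intros; apply muE_01; auto. intros; rewrite sumR_const; lra.
    intros s _. apply block_sum; auto.
    rewrite G_const by auto. lra.
  - intros j _. set (J' := upd J b j). rewrite G_split. apply G_ext_range.
    + intros t' a Ht' Ha. assert (Hbl : (blk L t' < b)%nat) by (apply blk_lt; lia).
      split.
      * unfold muE. f_equal. f_equal. apply sumR_ext. intros b' _. unfold hit.
        destruct (Nat.eqb_spec (blk L t') b'); auto. unfold J', upd. destruct (Nat.eqb_spec b' b); auto. lia.
      * unfold hit. destruct (Nat.eqb_spec (blk L t') b); auto. lia.
    + intros s Hs. simpl app. rewrite G_split. apply G_ext_range.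
      * intros t' a Ht' Ha. assert (Hbl : blk L t' = b) by (apply blk_eq; lia).
        split.
        -- unfold muE, pj. rewrite sum_hit, Hbl. destruct (Nat.ltb_spec b B); [|lia].
           unfold J', upd. rewrite Nat.eqb_refl. auto.
        -- unfold hit. rewrite Hbl, Nat.eqb_refl. unfold J', upd. rewrite Nat.eqb_refl. auto.
      * intros s' Hs'. rewrite <- (G_zero K pol (muE L B eps J') rest (1 + b * L + L) (s ++ s')).
        apply G_ext_range. intros t' a Ht' Ha. split; auto.
        unfold hit. destruct (Nat.eqb_spec (blk L t') b); auto.
        pose proof (blk_ge L b t' HL ltac:(lia)). lia.
        intros; auto.
all: try apply G_zero. Qed.

Lemma maxK_ge K f k : (k < K)%nat -> f k <= maxK K f.
Proof. induction K; intros Hk. lia. destruct K. replace k with 0%nat by lia. simpl; lra.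
  change (maxK (S (S K)) f) with (Rmax (maxK (S K) f) (f (S K))).
  destruct (Nat.eq_dec k (S K)). subst. apply Rmax_r.
  eapply Rle_trans. apply IHK. lia. apply Rmax_l. Qed.

Lemma maxK_le K f c : (1 <= K)%nat -> (forall k, (k < K)%nat -> f k <= c) -> maxK K f <= c.
Proof. induction K; intros HK H. lia. destruct K. simpl; apply H; lia.
  change (maxK (S (S K)) f) with (Rmax (maxK (S K) f) (f (S K))).
  apply Rmax_lub. apply IHK. lia. intros; apply H; lia. apply H; lia. Qed.

Lemma env_ok_bern T K mu : (forall t k, 0 <= mu t k <= 1) ->
  env_ok T K mu (fun t a => bern (mu t a)).
Proof. intros Hm t k _ _. specialize (Hm t k). split; auto. split.
  - split. unfold bern. constructor; [simpl; lra|]. constructor; [simpl; lra|constructor]. unfold dist_mass, bern; simpl; ring.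
  - unfold dist_mean, bern; simpl; ring. Qed.

Lemma sum_tele n (g : nat -> R) : sumR n (fun i => g (S i) - g i) = g n - g 0%nat.
Proof. induction n; simpl. ring. rewrite IHn. ring. Qed.

Lemma variation_bound T K L B eps J : (1 <= K)%nat -> (1 <= L)%nat -> 0 <= eps <= 1/4 ->
  variation T K (muE L B eps J) <= eps * INR ((T - 1) / L).
Proof. intros HK HL He. unfold variation.
  eapply Rle_trans. apply sumR_le with (g := fun i => eps * (INR ((S i) / L) - INR (i / L))).
  - intros i _. apply maxK_le; auto. intros k _.
    assert (E1 : blk L (S i) = (i / L)%nat) by (unfold blk; f_equal; lia).
    assert (E2 : blk L (S (S i)) = ((S i) / L)%nat) by (unfold blk; f_equal; lia).
    unfold muE. rewrite !sum_hit, E1, E2.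
    assert (Hle : (i / L <= S i / L)%nat) by (apply Nat.Div0.div_le_mono; lia).
    assert (Hle2 : (S i / L <= i / L + 1)%nat).
    { replace (i / L + 1)%nat with ((i + 1 * L) / L)%nat by (rewrite Nat.div_add; lia).
      apply Nat.Div0.div_le_mono; lia. }
    destruct (Nat.eq_dec (i / L) (S i / L)) as [E|E].
    + rewrite <- E. replace (1 / 2 + eps * _ - (1 / 2 + eps * _)) with 0 by ring.
      rewrite Rabs_R0. lra.
    + replace (S i / L)%nat with (i / L + 1)%nat by lia. rewrite plus_INR. simpl INR.
      replace (eps * (INR (i / L) + 1 - INR (i / L))) with eps by ring.
      set (x := if Nat.ltb (i / L)%nat B then indic (J (i / L)%nat) k else 0).
      set (y := if Nat.ltb (i / L + 1)%nat B then indic (J (i / L + 1)%nat) k else 0).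
      assert (0 <= x <= 1) by (unfold x; destruct (Nat.ltb (i / L)%nat B); [destruct (ind01 (J (i / L)%nat) k) as [Q|Q]; rewrite Q|]; lra).
      assert (0 <= y <= 1) by (unfold y; destruct (Nat.ltb (i / L + 1)%nat B); [destruct (ind01 (J (i / L + 1)%nat) k) as [Q|Q]; rewrite Q|]; lra).
      replace (1 / 2 + eps * x - (1 / 2 + eps * y)) with (eps * (x - y)) by ring.
      rewrite Rabs_mult, (Rabs_pos_eq eps) by lra.
      assert (Rabs (x - y) <= 1) by (apply Rabs_le; lra).
      pose proof (Rmult_le_compat_l eps _ _ ltac:(lra) H1). lra.
  - rewrite sumR_scal, (sum_tele (T - 1) (fun i => INR (i / L))). simpl. rewrite Nat.Div0.div_0_l. simpl. lra.
Qed.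

Lemma div_win j i W m : (1 <= W)%nat -> (1 <= m)%nat -> (i < W)%nat -> ((j * W + i) / (m * W) = j / m)%nat.
Proof. intros HW Hm Hi. rewrite (Nat.mul_comm m W), <- Nat.Div0.div_div. f_equal.
  symmetry. apply (Nat.div_unique _ _ _ i); lia. Qed.

Lemma benchmark_bound T K W m B eps J : (1 <= W)%nat -> (1 <= m)%nat -> Nat.divide W T ->
  (B * (m * W) <= T)%nat -> (forall i, (J i < K)%nat) -> 0 <= eps ->
  INR T / 2 + eps * INR (B * (m * W)) <= window_benchmark T K W (muE (m * W) B eps J).
Proof. intros HW Hm [z Hz] HBT HJ He. unfold window_benchmark.
  assert (HTW : (T / W = z)%nat) by (rewrite Hz; apply Nat.div_mul; lia).
  rewrite HTW.
  eapply Rle_trans; [|apply sumR_le with (f := fun j => INR W * (1/2 + eps * (if Nat.ltb j (m * B) then 1 else 0)))].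
  - rewrite (sumR_ext _ _ (fun j => INR W / 2 + (eps * INR W) * (if Nat.ltb j (m * B) then 1 else 0))).
    rewrite sumR_plus, sumR_const, sumR_scal. rewrite <- INR_thresh by nia.
    rewrite Hz, !mult_INR. right; field.
    intros; cbv beta. field.
  - intros j Hj. eapply Rle_trans; [|apply (maxK_ge K (fun k => sumR W (fun i => muE (m * W) B eps J (j * W + i + 1) k)) (J (j / m)%nat)); auto]. cbv beta.
    rewrite (sumR_ext _ _ (fun _ => 1/2 + eps * (if Nat.ltb j (m * B) then 1 else 0))).
    rewrite sumR_const. lra.
    intros i Hi. unfold muE. rewrite sum_hit. unfold blk.
    replace (j * W + i + 1 - 1)%nat with (j * W + i)%nat by lia. rewrite div_win by auto.
    destruct (Nat.ltb_spec (j / m) B); destruct (Nat.ltb_spec j (m * B)).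
    + unfold indic. rewrite Nat.eqb_refl. auto.
    + exfalso. assert (j < m * (j / m + 1))%nat.
      { pose proof (Nat.div_mod j m ltac:(lia)). pose proof (Nat.mod_upper_bound j m ltac:(lia)). nia. } nia.
    + exfalso. assert (m * (j / m) <= j)%nat by (apply Nat.Div0.mul_div_le). nia.
    + auto.
Qed.

Lemma exp_reward_decomp K pol T L B eps J : is_policy K pol ->
  exp_reward K pol (muE L B eps J) (fun t a => bern (muE L B eps J t a)) T 1 nil
  = INR T / 2 + eps * sumR B (fun b => Phi K pol T L B eps b J).
Proof. intros Hpol. rewrite exp_reward_G.
  rewrite (G_ext K pol _ _ (fun t a => (1/2) * 1 + eps * sumR B (fun b => hit L J b t a)) _
     (fun t h => (1/2) * 0 + eps * sumR B (fun b => 0))).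
  rewrite G_lin, G_const, G_sum by auto. unfold Phi. field.
  intros; unfold muE; ring. intros; rewrite sumR_const; ring. Qed.

Lemma Rbar_lub_ge (E : R -> Prop) r : E r -> Rbar_le (Finite r) (Lub_Rbar E).
Proof. intros H. destruct (Lub_Rbar_correct E) as [Hub _]. apply Hub; auto. Qed.

Lemma lower_bound_config T K W pol m B eps V : is_policy K pol -> (1 <= K)%nat ->
  (1 <= W)%nat -> (1 <= m)%nat -> Nat.divide W T -> (1 <= B)%nat -> (B * (m * W) <= T)%nat ->
  0 <= eps <= 1/4 -> eps * INR ((T - 1) / (m * W)) <= V ->
  Rbar_le (Finite (eps * (INR (B * (m * W)) - INR B *
      (INR (m * W) + INR (m * W) * sqrt (kl0 eps / 2) * sqrt (INR K * INR (m * W))) / INR K)))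
    (worst_regret T K W V pol).
Proof. intros Hpol HK HW Hm HWT HB HBT He HV.
  set (L := (m * W)%nat). assert (HL : (1 <= L)%nat) by (unfold L; nia).
  set (U := INR L + INR L * sqrt (kl0 eps / 2) * sqrt (INR K * INR L)).
  assert (Havg : avgS K B (fun J => sumR B (fun b => Phi K pol T L B eps b J)) <= INR B * (INR K ^ (B - 1) * U)).
  { rewrite avgS_sum. rewrite <- sumR_const. apply sumR_le. intros b Hb.
    apply avgS_coord with (b := b); auto. intros J. apply block_avg; auto. }
  destruct (avgS_exists K B (fun J => sumR B (fun b => Phi K pol T L B eps b J)) HK) as [J [HJ HJle]].
  assert (HKpos : 0 < INR K) by (apply lt_0_INR; lia).
  assert (Hsum : sumR B (fun b => Phi K pol T L B eps b J) <= INR B * U / INR K).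
  { assert (INR K ^ B = INR K * INR K ^ (B - 1)) by (replace B with (S (B - 1)) at 1 by lia; reflexivity).
    assert (0 < INR K ^ (B - 1)) by (apply pow_lt; auto).
    apply Rmult_le_reg_l with (INR K ^ B). apply pow_lt; auto.
    eapply Rle_trans. apply HJle. eapply Rle_trans. apply Havg. right. rewrite H. field. lra. }
  apply Rle_trans with (1 := ltac:(apply Rbar_le_refl)) || idtac.
  eapply Rbar_le_trans; [|apply Rbar_lub_ge].
  2: { exists (muE L B eps J), (fun t a => bern (muE L B eps J t a)). split; [|split].
       apply env_ok_bern. intros; apply muE_01; auto.
       eapply Rle_trans. apply variation_bound; auto. auto. reflexivity. }
  simpl. unfold regret. rewrite exp_reward_decomp by auto.
  pose proof (benchmark_bound T K W m B eps J HW Hm HWT HBT HJ ltac:(lra)). fold L in H.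
  assert (eps * sumR B (fun b => Phi K pol T L B eps b J) <= eps * (INR B * U / INR K)) by (apply Rmult_le_compat_l; lra).
  fold U. unfold Rdiv in *. lra.
Qed.

Lemma s_bounds : 0 <= sqrt (ln (4/3)) <= 1.
Proof. split. apply sqrt_pos. rewrite <- sqrt_1. apply sqrt_le_1_alt. pose proof ln43_lt1; lra. Qed.

Lemma final_block K L B eps : (2 <= K)%nat -> 0 <= eps <= 1/4 -> 16 * eps ^ 2 * INR L / INR K <= 1 ->
  4 * (1/8 - sqrt (ln (4/3)) / 8) * eps * INR B * INR L <=
  eps * (INR (B * L) - INR B * (INR L + INR L * sqrt (kl0 eps / 2) * sqrt (INR K * INR L)) / INR K).
Proof. intros HK He Hq.
  assert (HK2 : 2 <= INR K) by (replace 2 with (INR 2) by (simpl; ring); apply le_INR; auto).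
  set (s := sqrt (ln (4/3))).
  set (Q := sqrt (kl0 eps / 2) * sqrt (INR K * INR L) / INR K).
  assert (Hkl : 0 <= kl0 eps) by (apply kl0_nonneg; auto).
  assert (HL0 : 0 <= INR L) by apply pos_INR.
  assert (HQ0 : 0 <= Q) by (unfold Q; apply Rmult_le_pos; [apply Rmult_le_pos; apply sqrt_pos| apply Rlt_le, Rinv_0_lt_compat; lra]).
  assert (Hkl2 : kl0 eps <= 8 * ln (4/3) * eps ^ 2).
  { unfold kl0. pose proof (chord (4 * eps ^ 2) ltac:(split; nra)). lra. }
  assert (HQ2 : Q ^ 2 = kl0 eps * INR L / (2 * INR K)).
  { unfold Q. replace ((sqrt (kl0 eps / 2) * sqrt (INR K * INR L) / INR K) ^ 2) with
      ((sqrt (kl0 eps / 2)) ^ 2 * (sqrt (INR K * INR L)) ^ 2 / (INR K) ^ 2) by (field; lra).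
    rewrite !pow2_sqrt by (try apply Rmult_le_pos; lra). field. lra. }
  assert (HQs : Q <= s / 2).
  { assert (Q ^ 2 <= (s / 2) ^ 2).
    { rewrite HQ2. replace ((s / 2) ^ 2) with (s ^ 2 / 4) by field. unfold s. rewrite pow2_sqrt by (pose proof ln43_pos; lra).
      apply Rmult_le_reg_r with (2 * INR K). lra.
      replace (kl0 eps * INR L / (2 * INR K) * (2 * INR K)) with (kl0 eps * INR L) by (field; lra).
      assert (eps ^ 2 * INR L <= INR K / 16).
      { apply Rmult_le_reg_r with (16 / INR K). apply Rdiv_lt_0_compat; lra.
        replace (INR K / 16 * (16 / INR K)) with 1 by (field; lra).
        replace (eps ^ 2 * INR L * (16 / INR K)) with (16 * eps ^ 2 * INR L / INR K) by (field; lra). auto. }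
      pose proof ln43_pos.
      apply Rle_trans with (8 * ln (4/3) * eps ^ 2 * INR L). apply Rmult_le_compat_r; auto.
      nra. }
    pose proof s_bounds. fold s in H0. nra. }
  assert (HU : INR B * (INR L + INR L * sqrt (kl0 eps / 2) * sqrt (INR K * INR L)) / INR K
     = INR B * INR L * (1 / INR K + Q)) by (unfold Q; field; lra).
  rewrite HU, mult_INR.
  assert (1 / INR K <= 1/2) by (apply Rmult_le_compat_l; [lra|apply Rinv_le_contravar; lra]).
  assert (0 <= INR B) by apply pos_INR.
  assert (0 <= eps * INR B * INR L) by (apply Rmult_le_pos; [apply Rmult_le_pos|]; lra).
  assert (1 - (1/INR K + Q) >= 1/2 - s/2) by lra.
  replace (eps * (INR B * INR L - INR B * INR L * (1 / INR K + Q))) with (eps * INR B * INR L * (1 - (1 / INR K + Q))) by ring.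
  replace (4 * (1 / 8 - s / 8) * eps * INR B * INR L) with (eps * INR B * INR L * (1/2 - s/2)) by field.
  apply Rmult_le_compat_l; lra.
Qed.

Lemma cube_lt a b : 0 <= a -> a < b -> a ^ 3 < b ^ 3.
Proof. intros Ha Hab. assert (0 < (b - a) * (a ^ 2 + a * b + b ^ 2)).
  apply Rmult_lt_0_compat. lra. nra. replace (b ^ 3) with (a ^ 3 + (b - a) * (a ^ 2 + a * b + b ^ 2)) by ring. lra. Qed.

Lemma cube_inj a b : 0 <= a -> 0 <= b -> a ^ 3 = b ^ 3 -> a = b.
Proof. intros Ha Hb H. destruct (Rtotal_order a b) as [Hl|[E|Hl]]; auto; exfalso.
  - pose proof (cube_lt a b Ha Hl). lra.
  - pose proof (cube_lt b a Hb Hl). lra. Qed.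

Lemma cube_le a b : 0 <= a -> 0 <= b -> a ^ 3 <= b ^ 3 -> a <= b.
Proof. intros Ha Hb H. destruct (Rle_dec a b); auto. exfalso.
  pose proof (cube_lt b a Hb ltac:(lra)). lra. Qed.

Lemma Rpower_cube x y : 0 < x -> Rpower x y ^ 3 = Rpower x (3 * y).
Proof. intros Hx. rewrite <- Rpower_pow by (apply exp_pos). rewrite Rpower_mult. f_equal. simpl; ring. Qed.

Lemma Rpower_third x : 0 < x -> Rpower x (1/3) ^ 3 = x.
Proof. intros Hx. rewrite Rpower_cube by auto. replace (3 * (1/3)) with 1 by field. apply Rpower_1; auto. Qed.

Lemma Rpower_twothird x : 0 < x -> Rpower x (2/3) ^ 3 = x ^ 2.
Proof. intros Hx. rewrite Rpower_cube by auto. replace (3 * (2/3)) with (INR 2) by (simpl; field).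
  apply Rpower_pow; auto. Qed.

Theorem corollary4p2 (T K W : nat) (V : R) :
  (2 <= K)%nat -> (K <= T)%nat -> 0 < V -> V <= INR T / INR K ->
  (0 < W)%nat -> Nat.divide W T ->
  forall pol : policy, is_policy K pol ->
  (INR W <= Rpower (INR K) (1/3) * Rpower (INR T / V) (2/3) ->
     Rbar_le (Finite ((1/8 - sqrt (ln (4/3)) / 8) / 3 *
                      Rpower (INR K * V) (1/3) * Rpower (INR T) (2/3)))
             (worst_regret T K W V pol)) /\
  (INR W >= Rpower (INR K) (1/3) * Rpower (INR T / V) (2/3) ->
     Rbar_le (Finite ((1/8 - sqrt (ln (4/3)) / 8) * INR T * sqrt (INR K / INR W)))
             (worst_regret T K W V pol)).
Proof.
  intros HK HKT HV HVT HW HWT pol Hpol.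
  assert (HKr : 2 <= INR K) by (replace 2 with (INR 2) by (simpl; ring); apply le_INR; auto).
  assert (HTr : INR K <= INR T) by (apply le_INR; auto).
  assert (HWr : 1 <= INR W) by (replace 1 with (INR 1) by reflexivity; apply le_INR; lia).
  destruct HWT as [z Hz].
  assert (Hz1 : (1 <= z)%nat) by (destruct z; lia).
  assert (HTz : INR T = INR z * INR W) by (rewrite Hz, mult_INR; ring).
  assert (HTV : INR K <= INR T / V).
  { apply Rmult_le_reg_r with V; auto. replace (INR T / V * V) with (INR T) by (field; lra).
    apply Rmult_le_reg_r with (/ INR K). apply Rinv_0_lt_compat; lra.
    replace (INR K * V * / INR K) with V by (field; lra). auto. }
  set (c := 1/8 - sqrt (ln (4/3)) / 8).
  assert (Hc : 0 <= c) by (unfold c; pose proof s_bounds; lra).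
  set (A := Rpower (INR K) (1/3)). set (Bp := Rpower (INR T / V) (2/3)).
  assert (HA : 0 < A) by apply exp_pos. assert (HBp : 0 < Bp) by apply exp_pos.
  assert (HA3 : A ^ 3 = INR K) by (apply Rpower_third; lra).
  assert (HB3 : Bp ^ 3 = (INR T / V) ^ 2) by (apply Rpower_twothird; lra).
  set (Ws := A * Bp).
  assert (HWs : 0 < Ws) by (apply Rmult_lt_0_compat; auto).
  assert (HWs3 : Ws ^ 3 = INR K * (INR T / V) ^ 2) by (unfold Ws; rewrite Rpow_mult_distr, HA3, HB3; auto).
  split.
  -
    intros HWW. fold A Bp in HWW. fold Ws in HWW.
    set (Y := Rpower (INR K * V / INR T) (1/3)).
    assert (HY : 0 < Y) by apply exp_pos.
    assert (HY3 : Y ^ 3 = INR K * V / INR T) by (apply Rpower_third; apply Rdiv_lt_0_compat; [apply Rmult_lt_0_compat|]; lra).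
    set (X := Rpower (INR K * V) (1/3) * Rpower (INR T) (2/3)).
    assert (HX : X = Y * INR T).
    { apply cube_inj. unfold X; apply Rmult_le_pos; left; apply exp_pos. nra.
      unfold X. rewrite Rpow_mult_distr, Rpower_third, Rpower_twothird by (try apply Rmult_lt_0_compat; lra).
      rewrite Rpow_mult_distr, HY3. field. lra. }
    assert (HY2 : Y ^ 2 * Ws = INR K).
    { apply cube_inj. apply Rmult_le_pos; nra. lra.
      replace ((Y ^ 2 * Ws) ^ 3) with ((Y ^ 3) ^ 2 * Ws ^ 3) by ring. rewrite HY3, HWs3. field. lra. }
    assert (HYT : Y * INR T = V * Ws).
    { apply cube_inj. nra. nra.
      rewrite !Rpow_mult_distr. rewrite HY3, HWs3. field. lra. }
    assert (HY1 : Y <= 1).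
    { apply cube_le; try lra. rewrite HY3. simpl. apply Rmult_le_reg_r with (INR T). lra.
      replace (INR K * V / INR T * INR T) with (INR K * V) by (field; lra).
      apply Rmult_le_reg_r with (/ INR K). apply Rinv_0_lt_compat; lra.
      replace (INR K * V * / INR K) with V by (field; lra).
      replace (1 * (1 * (1 * 1)) * INR T * / INR K) with (INR T / INR K) by (field; lra). auto. }
    set (eps := Y / 6).
    assert (He : 0 <= eps <= 1/4) by (unfold eps; split; lra).
    destruct (Rle_dec (INR T) Ws) as [Hcase|Hcase].
    +
      assert (Hvar : eps * INR ((T - 1) / (z * W)) <= V).
      { rewrite <- Hz. assert ((T - 1) / T = 0)%nat by (apply Nat.div_small; lia). rewrite H. simpl. lra. }
      pose proof (lower_bound_config T K W pol z 1 eps V Hpol ltac:(lia) ltac:(lia) Hz1 (ex_intro _ z Hz) ltac:(lia) ltac:(lia) He Hvar) as Hlb.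
      eapply Rbar_le_trans; [|exact Hlb]. cbn [Rbar_le].
      rewrite <- Hz. replace (c / 3 * Rpower (INR K * V) (1 / 3) * Rpower (INR T) (2 / 3)) with (c / 3 * X) by (unfold X; ring).
      rewrite HX.
      eapply Rle_trans; [|apply (final_block K T 1 eps HK He)].
      replace (INR 1) with 1 by reflexivity. unfold eps. assert (0 <= Y * INR T) by nra. unfold c in *. nra.
      unfold eps. apply Rmult_le_reg_r with (INR K). lra.
      replace (16 * (Y / 6) ^ 2 * INR T / INR K * INR K) with (16 / 36 * (Y ^ 2 * INR T)) by (field; lra).
      assert (Y ^ 2 * INR T <= Y ^ 2 * Ws) by (apply Rmult_le_compat_l; nra). nra.
    +
      apply Rnot_le_lt in Hcase.
      destruct (nfloor_ex (Ws / INR W) ltac:(apply Rlt_le, Rdiv_lt_0_compat; lra)) as [m [Hm1 Hm2]].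
      assert (HWs1 : 1 <= Ws / INR W) by (apply Rmult_le_reg_r with (INR W); [lra|]; replace (Ws / INR W * INR W) with Ws by (field; lra); lra).
      assert (Hm : (1 <= m)%nat) by (destruct m; [simpl in Hm2; lra| lia]).
      set (L := (m * W)%nat).
      assert (HLr : INR L = INR m * INR W) by (unfold L; apply mult_INR).
      assert (HL1 : INR L <= Ws).
      { rewrite HLr. apply Rmult_le_reg_r with (/ INR W). apply Rinv_0_lt_compat; lra.
        replace (INR m * INR W * / INR W) with (INR m) by (field; lra). auto. }
      assert (HL2 : Ws < 2 * INR L).
      { assert (Ws < INR L + INR W).
        { rewrite HLr. apply Rmult_lt_reg_r with (/ INR W). apply Rinv_0_lt_compat; lra.
          replace ((INR m * INR W + INR W) * / INR W) with (INR m + 1) by (field; lra).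
          replace (Ws * / INR W) with (Ws / INR W) by reflexivity. auto. }
        assert (INR W <= INR L) by (rewrite HLr; assert (1 <= INR m) by (replace 1 with (INR 1) by reflexivity; apply le_INR; auto); nra).
        lra. }
      assert (HLT : (L < T)%nat) by (apply INR_lt; lra).
      assert (HL0 : (1 <= L)%nat) by (unfold L; nia).
      set (B := (T / L)%nat).
      assert (HB1 : (1 <= B)%nat) by (apply Nat.div_le_lower_bound; lia).
      assert (HBL : (B * L <= T)%nat) by (unfold B; rewrite Nat.mul_comm; apply Nat.Div0.mul_div_le).
      assert (HBL2 : (T < L * (B + 1))%nat).
      { unfold B. pose proof (Nat.div_mod T L ltac:(lia)). pose proof (Nat.mod_upper_bound T L ltac:(lia)). nia. }
      assert (HBLr : INR T < 2 * (INR B * INR L)).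
      { apply lt_INR in HBL2. rewrite mult_INR, plus_INR in HBL2. simpl INR in HBL2.
        assert (1 <= INR B) by (replace 1 with (INR 1) by reflexivity; apply le_INR; auto). nra. }
      assert (HBLr2 : INR B * INR L <= INR T) by (rewrite <- mult_INR; apply le_INR; auto).
      assert (Hvar : eps * INR ((T - 1) / L) <= V).
      { assert (INR ((T - 1) / L) <= INR B) by (apply le_INR; apply Nat.Div0.div_le_mono; lia).
        assert (0 < INR L) by lra.
        assert (INR B <= INR T / INR L) by (apply Rmult_le_reg_r with (INR L); [lra|]; replace (INR T / INR L * INR L) with (INR T) by (field; lra); lra).
        assert (eps * (INR T / INR L) <= V).
        { unfold eps. apply Rmult_le_reg_r with (6 * INR L). lra.
          replace (Y / 6 * (INR T / INR L) * (6 * INR L)) with (Y * INR T) by (field; lra). nra. }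
        assert (eps * INR ((T - 1) / L) <= eps * (INR T / INR L)) by (apply Rmult_le_compat_l; lra). lra. }
      pose proof (lower_bound_config T K W pol m B eps V Hpol ltac:(lia) ltac:(lia) Hm (ex_intro _ z Hz) HB1 HBL He Hvar) as Hlb.
      eapply Rbar_le_trans; [|exact Hlb]. cbn [Rbar_le]. fold L.
      replace (c / 3 * Rpower (INR K * V) (1 / 3) * Rpower (INR T) (2 / 3)) with (c / 3 * X) by (unfold X; ring).
      rewrite HX.
      eapply Rle_trans; [|apply (final_block K L B eps HK He)].
      unfold eps. assert (0 <= Y * INR T) by nra. unfold c in *.
      assert (Y * INR T <= 2 * Y * (INR B * INR L)) by nra. nra.
      unfold eps. apply Rmult_le_reg_r with (INR K). lra.
      replace (16 * (Y / 6) ^ 2 * INR L / INR K * INR K) with (16 / 36 * (Y ^ 2 * INR L)) by (field; lra).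
      assert (Y ^ 2 * INR L <= Y ^ 2 * Ws) by (apply Rmult_le_compat_l; nra). nra.
  -
    intros HWW. fold A Bp in HWW. fold Ws in HWW. apply Rge_le in HWW.
    assert (HW3 : INR K * (INR T / V) ^ 2 <= INR W ^ 3) by (rewrite <- HWs3; apply pow_incr; lra).
    assert (HKW : INR K <= INR W).
    { apply cube_le; try lra. eapply Rle_trans; [|apply HW3].
      replace (INR K ^ 3) with (INR K * INR K ^ 2) by ring. apply Rmult_le_compat_l. lra.
      apply pow_incr; lra. }
    set (eps := 1/4 * sqrt (INR K / INR W)).
    assert (Hsq : sqrt (INR K / INR W) <= 1).
    { rewrite <- sqrt_1. apply sqrt_le_1_alt. apply Rmult_le_reg_r with (INR W). lra.
      replace (INR K / INR W * INR W) with (INR K) by (field; lra). lra. }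
    assert (He : 0 <= eps <= 1/4) by (unfold eps; pose proof (sqrt_pos (INR K / INR W)); lra).
    assert (He2 : eps ^ 2 = INR K / (16 * INR W)).
    { unfold eps. rewrite Rpow_mult_distr, pow2_sqrt. field. lra. apply Rdiv_le_0_compat; lra. }
    assert (Hvar : eps * INR ((T - 1) / (1 * W)) <= V).
    { rewrite Nat.mul_1_l.
      assert (INR ((T - 1) / W) <= INR z).
      { apply le_INR. rewrite Hz. apply Nat.Div0.div_le_upper_bound. nia. }
      assert (eps * INR z <= V).
      { apply Rsqr_incr_0_var. unfold Rsqr. replace (eps * INR z * (eps * INR z)) with (eps ^ 2 * INR z ^ 2) by ring.
        rewrite He2. apply Rmult_le_reg_r with (16 * INR W ^ 3). nra.
        replace (INR K / (16 * INR W) * INR z ^ 2 * (16 * INR W ^ 3)) with (INR K * (INR z * INR W) ^ 2) by (field; lra).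
        rewrite <- HTz. replace (V * V * (16 * INR W ^ 3)) with (16 * V ^ 2 * INR W ^ 3) by ring.
        replace (INR K * (INR T / V) ^ 2) with (INR K * INR T ^ 2 / V ^ 2) in HW3 by (field; lra).
        apply Rmult_le_compat_r with (r := V ^ 2) in HW3; [|nra].
        replace (INR K * INR T ^ 2 / V ^ 2 * V ^ 2) with (INR K * INR T ^ 2) in HW3 by (field; lra).
        assert (0 <= INR W ^ 3 * V ^ 2) by (apply Rmult_le_pos; [apply pow_le|]; nra). nra. lra. }
      assert (eps * INR ((T - 1) / W) <= eps * INR z) by (apply Rmult_le_compat_l; lra). lra. }
    pose proof (lower_bound_config T K W pol 1 z eps V Hpol ltac:(lia) ltac:(lia) (le_n 1) (ex_intro _ z Hz) Hz1 ltac:(lia) He Hvar) as Hlb.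
    eapply Rbar_le_trans; [|exact Hlb]. cbn [Rbar_le]. rewrite Nat.mul_1_l.
    eapply Rle_trans; [|apply (final_block K W z eps HK He)].
    unfold eps. right. rewrite HTz. fold c. field.
    rewrite He2. right. field. lra.
Qed.
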